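(* Let $\Lambda$ be a finite-dimensional algebra over an algebraically closed field $K$ and let $\Lambda\twoheadrightarrow\Lambda'$ be a surjective algebra homomorphism. Suppose there exist a dimension vector $\mathbf{d}'$ and $\theta'\in K_0(\mathrm{proj}\,\Lambda')$ such that there are infinitely many isomorphism classes of $\theta'$-stable $\Lambda'$-modules of dimension vector $\mathbf{d}'$. Then there exist a dimension vector $\mathbf{d}$ and $\theta\in K_0(\mathrm{proj}\,\Lambda)$ such that there are infinitely many isomorphism classes of $\theta$-stable $\Lambda$-modules of dimension vector $\mathbf{d}$.
   Context: Modules are finite-dimensional right modules; $\Lambda'$-modules are regarded as $\Lambda$-modules by restriction along the surjection. $K_0(\mathrm{proj}\,\Lambda)\cong K_0(\mathrm{mod}\,\Lambda)\cong\mathbb{Z}^n$ via indecomposable projectives and simples; the dimension vector of $M$ is $[M]\in K_0(\mathrm{mod}\,\Lambda)$; $\langle-,-\rangle$ is the canonical pairing ($\langle[P],[M]\rangle=\dim\mathrm{Hom}_\Lambda(P,M)$). For $\theta\in K_0(\mathrm{proj}\,\Lambda)$, $M$ is $\theta$-stable if $\langle\theta,[M]\rangle=0$ and $\langle\theta,[M']\rangle<0$ for every nonzero proper submodule $M'\subset M$. *)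

(* Defs.v *)
From HB Require Import structures.
From mathcomp Require Import all_boot all_order all_algebra all_field.
Set Implicit Arguments. Unset Strict Implicit. Unset Printing Implicit Defensive.
Import Order.TTheory GRing.Theory Num.Theory.
Local Open Scope ring_scope.

(* A finite-dimensional right A-module, realized on row vectors K^m:
   v . a := v *m ract a.  Right action: ract (a * b) = ract a *m ract b. *)
Record rmod (K : fieldType) (A : falgType K) := RMod {
  rdim : nat;
  ract : A -> 'M[K]_rdim;
  ract_lin : forall (c : K) (x y : A), ract (c *: x + y) = c *: ract x + ract y;
  ract1 : ract 1 = 1%:M;
  ractM : forall a b : A, ract (a * b) = ract a *m ract b
}.

Definition mod_iso (K : fieldType) (A : falgType K) (M N : rmod A) : Prop :=
  exists P : 'M[K]_(rdim M, rdim N),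
    [/\ row_free P, row_full P & forall a : A, ract M a *m P = P *m ract N a].

Definition submod (K : fieldType) (A : falgType K) (M : rmod A)
  (U : 'M[K]_(rdim M)) : Prop := forall a : A, (U *m ract M a <= U)%MS.

Definition idempotent (K : fieldType) (A : falgType K) (e : A) : Prop := e * e = e.

(* An element of K_0(proj A): a formal Z-combination  sum_j c_j [e_j A]
   of classes of projectives e_j A, with e_j idempotent. *)
Definition K0proj (K : fieldType) (A : falgType K) := seq (int * A).
Definition K0proj_wf (K : fieldType) (A : falgType K) (th : K0proj A) : Prop :=
  forall p, p \in th -> idempotent p.2.

(* Canonical pairing <theta, [U]> for the submodule U of M:
   <[eA], [N]> = dim Hom_A(eA, N) = dim (N e), and U e = rowspace (U *m ract e). *)
Definition pairing (K : fieldType) (A : falgType K) (th : K0proj A) (M : rmod A)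
  (U : 'M[K]_(rdim M)) : int :=
  \sum_(p <- th) p.1 * ((\rank (U *m ract M p.2))%:Z).

Arguments pairing {K A} th M U.

Definition stable (K : fieldType) (A : falgType K) (th : K0proj A) (M : rmod A) : Prop :=
  pairing th M 1%:M = 0 /\
  forall U : 'M[K]_(rdim M), submod U -> \rank U != 0%N -> (\rank U < rdim M)%N ->
    pairing th M U < 0.

(* Dimension vectors: [M] in K_0(mod A) is recorded by the function
   e |-> dim Hom_A(eA, M) = dim (M e) on idempotents e (its values on a
   complete set of primitive idempotents are the composition multiplicities,
   K algebraically closed). *)
Definition dimvec (K : fieldType) (A : falgType K) := A -> nat.
Definition has_dimvec (K : fieldType) (A : falgType K) (M : rmod A) (d : dimvec A) : Prop :=
  forall e : A, idempotent e -> \rank (ract M e) = d e.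

Definition inf_iso_classes (K : fieldType) (A : falgType K) (P : rmod A -> Prop) : Prop :=
  exists F : nat -> rmod A,
    (forall i, P (F i)) /\ (forall i j, i <> j -> ~ mod_iso (F i) (F j)).

(* Main.v *)
Require Import Defs.
From HB Require Import structures.
From mathcomp Require Import all_boot all_order all_algebra all_field.
From Stdlib Require Import Classical.
From mathcomp Require Import ring.
Import GRing.Theory.
Local Open Scope ring_scope.

Lemma horner_alg_idem (K : fieldType) (L : falgType K) (e : L) :
  e * e = e -> forall p : {poly K}, horner_alg e p = p.[0]%:A + (p.[1] - p.[0]) *: e.
Proof.
move=> ee; elim/poly_ind => [|p c IH].
  by rewrite rmorph0 !horner0 subrr scale0r scale0r addr0.
rewrite rmorphD rmorphM /= IH horner_algX horner_algC !hornerE.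
rewrite mulrDl -scalerAl mul1r -scalerAl ee.
by rewrite -scalerDl [_ + (_ - _)]addrC subrK addrK addrC.
Qed.

Lemma horner_alg_idem01 (K : fieldType) (L : falgType K) (e : L) (p : {poly K}) :
  e * e = e -> p.[0] = 0 -> p.[1] = 1 -> horner_alg e p = e.
Proof.
by move=> ee p0 p1; rewrite horner_alg_idem // p0 p1 subr0 scale1r scale0r add0r.
Qed.

Lemma horner_alg_poly (K : fieldType) (L : falgType K) (a : L) n (E : nat -> K) :
  horner_alg a (\poly_(i < n) E i) = \sum_(i < n) E i *: a ^+ i.
Proof.
rewrite poly_def raddf_sum; apply: eq_bigr => i _.
change (horner_alg a (E i *: 'X^i) = E i *: a ^+ i).
by rewrite -mul_polyC rmorphM /= horner_algC rmorphXn /= horner_algX mulr_algl.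
Qed.

Lemma annihilator (K : fieldType) (L : falgType K) (a : L) :
  exists q : {poly K}, q != 0 /\ horner_alg a q = 0.
Proof.
set n := \dim {:L}.
set X := [tuple of mkseq (fun i => a ^+ i) n.+1].
have nf : ~~ free X.
  rewrite /free size_mkseq neq_ltn; apply/orP; left.
  by apply: leq_ltn_trans (dimvS (subvf _)) _.
have : ~ (forall k : 'I_n.+1 -> K, \sum_(i < n.+1) k i *: X`_i = 0 -> forall i, k i = 0).
  by move=> H; move/negP: nf; apply; apply/freeP.
move=> H; destruct (not_all_ex_not _ _ H) as [k Hk].
destruct (imply_to_and _ _ Hk) as [Hs Hn].
destruct (not_all_ex_not _ _ Hn) as [i Hi].
exists (\poly_(j < n.+1) (if insub j is Some j' then k j' else 0)).
split.
  apply/eqP => /(congr1 (fun p : {poly K} => p`_i)).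
  rewrite coef_poly ltn_ord insubT ?ltn_ord //= coefC /= => h; rewrite if_same => h2; apply: Hi; rewrite -[RHS]h2; congr k; exact: val_inj.
rewrite horner_alg_poly -[RHS]Hs; apply: eq_bigr => j _.
rewrite insubT ?ltn_ord //= => h; rewrite nth_mkseq //; congr (k _ *: _); exact: val_inj.
Qed.

Lemma lift_idem (K : fieldType) (L L' : falgType K)
  (f : {lrmorphism L -> L'}) (f_surj : forall y : L', exists x : L, f x = y)
  (e' : L') : e' * e' = e' -> exists e : L, e * e = e /\ f e = e'.
Proof.
move=> ee'; have [x fx] := f_surj e'.
have [q [q0 hq]] := @annihilator _ _ x.
pose Q := q * 'X * ('X - 1%:P).
have Q0 : Q != 0.
  by rewrite /Q !mulf_neq0 ?polyX_eq0 ?polyXsubC_eq0.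
have hQ : horner_alg x Q = 0 by rewrite /Q !rmorphM /= hq !mul0r.
have [m [r rnot1 Qr]] := multiplicity_XsubC Q 1.
move: rnot1; rewrite Q0 /= => rnot1.
have Q1 : root Q 1 by rewrite /Q rootE !hornerE mulf_eq0 subr_eq0 eqxx orbT.
have QO : root Q 0 by rewrite /Q rootE !hornerE.
have m0 : (0 < m)%N.
  case: m Qr => // Qr; move: Q1; rewrite Qr expr0 mulr1 => Q1.
  by rewrite Q1 in rnot1.
have r0 : root r 0.
  move: QO; rewrite Qr rootE !hornerE mulf_eq0 expf_eq0 => /orP[] //.
  by rewrite oppr_eq0 oner_eq0 andbF.
have cop : coprimep r (('X - 1%:P) ^+ m).
  by rewrite coprimep_expr // coprimep_XsubC.
have [[u v] /= Huv] := Bezout_eq1_coprimepP _ _ cop.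
pose g := u * r.
have gg : g * g - g = - (u * v) * Q.
  have g1 : g - 1 = - (v * ('X - 1%:P) ^+ m) by rewrite -Huv /g opprD addrA subrr add0r.
  have -> : g * g - g = g * (g - 1) by ring.
  by rewrite g1 Qr /g; ring.
exists (horner_alg x g); split.
  rewrite -rmorphM /=.
  have -> : g * g = g + (g * g - g) by rewrite addrC subrK.
  by rewrite rmorphD gg [X in _ + X]rmorphM /= hQ mulr0 addr0.
have fh : forall p : {poly K}, f (horner_alg x p) = horner_alg (f x) p.
  elim/poly_ind => [|p c IH]; first by rewrite !rmorph0.
  by rewrite !rmorphD !rmorphM /= IH !horner_algX !horner_algC rmorph_alg.
rewrite fh fx.
have g0 : g.[0] = 0 by rewrite /g hornerM (rootP r0) mulr0.
have g1 : g.[1] = 1.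
  move/(congr1 (fun p : {poly K} => p.[1])): Huv.
  by rewrite !hornerE subrr expr0n (negbTE (lt0n_neq0 m0)) mulr0 addr0.
exact: horner_alg_idem01.
Qed.


Lemma lift_K0 (K : fieldType) (L L' : falgType K)
  (f : {lrmorphism L -> L'}) (f_surj : forall y : L', exists x : L, f x = y)
  (th' : K0proj L') : K0proj_wf th' ->
  exists th : K0proj L, K0proj_wf th /\ map (fun p => (p.1, f p.2)) th = th'.
Proof.
elim: th' => [|[c e'] th' IH] wf.
  by exists [::]; split => // p.
have [|th [wf1 eth]] := IH.
  by move=> p hp; apply: wf; rewrite inE hp orbT.
have [|e [ee fe]] := @lift_idem _ _ _ f f_surj e'.
  by have := wf (c, e'); rewrite inE eqxx; apply.
exists ((c, e) :: th); split; last by rewrite /= fe eth.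
move=> p; rewrite inE => /orP[/eqP -> |]; first exact: ee.
exact: wf1.
Qed.

Section PB.
Variables (K : fieldType) (L L' : falgType K) (f : {lrmorphism L -> L'}).
Variable M : rmod L'.

Lemma pb_lin (c : K) (x y : L) :
  ract M (f (c *: x + y)) = c *: ract M (f x) + ract M (f y).
Proof. by rewrite linearD linearZ /= ract_lin. Qed.

Lemma pb_1 : ract M (f 1) = 1%:M.
Proof. by rewrite rmorph1 ract1. Qed.

Lemma pb_M (a b : L) : ract M (f (a * b)) = ract M (f a) *m ract M (f b).
Proof. by rewrite rmorphM ractM. Qed.

Definition pb : rmod L := @RMod K L (rdim M) (fun a => ract M (f a)) pb_lin pb_1 pb_M.
End PB.

Theorem proposition3p8 (K : closedFieldType) (L L' : falgType K)
  (f : {lrmorphism L -> L'}) (f_surj : forall y : L', exists x : L, f x = y) :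
  (exists (d' : dimvec L') (th' : K0proj L'), K0proj_wf th' /\
     inf_iso_classes (fun M : rmod L' => stable th' M /\ has_dimvec M d')) ->
  exists (d : dimvec L) (th : K0proj L), K0proj_wf th /\
     inf_iso_classes (fun M : rmod L => stable th M /\ has_dimvec M d).
Proof.
move=> [d' [th' [wf [F [HF Hni]]]]].
have [th [wfth eth]] := @lift_K0 _ _ _ f f_surj th' wf.
have hpair : forall (M : rmod L') (U : 'M[K]_(rdim M)),
    pairing th (@pb _ _ _ f M) U = pairing th' M U.
  by move=> M U; rewrite /pairing -eth big_map.
exists (fun e => d' (f e)), th; split => //.
exists (fun i => @pb _ _ _ f (F i)); split.
  move=> i; have [[h0 hU] hd] := HF i; split; [split|].
  - by rewrite hpair.
  - move=> U sU r0 rlt; rewrite hpair; apply: hU => // a'.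
    by have [a <-] := f_surj a'; apply: sU.
  - move=> e ee; apply: hd.
    by rewrite /Defs.idempotent -rmorphM ee.
move=> i j ij [P [P1 P2 P3]]; apply: (Hni i j ij); exists P; split; [exact: P1 | exact: P2 | move=> a'].
have [a <-] := f_surj a'; exact: (P3 a).
Qed.
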